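(* Let $n\ge1$, let $\mathfrak{n}=\mathfrak{n}(n)$ be the Lie algebra defined in the context, and let $\operatorname{Der}(\mathfrak{n})_1$ be as in the context. Let $B=\{e'_1,\dots,e'_n\}$ be any basis of $E$ and let $\mathfrak{B}(B)$ be the associated ordered basis of $\mathfrak{n}$. If $D\in\operatorname{Der}(\mathfrak{n})_1$, then the matrix of $D$ in the ordered basis $\mathfrak{B}(B)$ is lower triangular, i.e. for every $w\in\mathfrak{B}(B)$, the coordinates of $D(w)$ with respect to $\mathfrak{B}(B)$ are zero on all basis vectors that precede $w$ in the order of $\mathfrak{B}(B)$.
   Context: Fix a field of characteristic zero and a positive integer $n$. The Lie algebra $\mathfrak{n}(n)$ has basis $e_1,\dots,e_n,a,b,x$; $u,y$; $e_i\wedge e_j$ ($1\le i<j\le n$); $c$; $x_1,\dots,x_n$; $u_1,\dots,u_n$; $y_1,\dots,y_n$; $f,h$. Its bracket is defined on basis elements by: $[e_i,e_j]=e_i\wedge e_j$ for $i<j$ (so $[e_j,e_i]=-e_i\wedge e_j$), $[e_i,x]=x_i$, $[e_i,u]=u_i$, $[e_i,y]=y_i$, $[a,b]=c$, $[a,y]=f$, $[a,c]=h$, $[b,u]=h$, $[b,y]=h$, $[x,u]=f$, $[x,y]=h$, extended by antisymmetry, and all other brackets of pairs of basis elements are zero. Let $E=\operatorname{span}\{e_1,\dots,e_n\}$ and let $W$ be the span of all the other basis vectors (so $\mathfrak{n}=E\oplus W$). Let $\operatorname{Der}(\mathfrak{n})_1$ be the set of derivations $D$ of $\mathfrak{n}$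 with $D(E)\subset W$. For a basis $B=\{e'_1,\dots,e'_n\}$ of $E$, put $x'_i=[e'_i,x]$, $u'_i=[e'_i,u]$, $y'_i=[e'_i,y]$, $e'_i\wedge e'_j=[e'_i,e'_j]$, and let $\mathfrak{B}(B)$ be the ordered basis $e'_1,\dots,e'_n,a,b,x,u,y,(e'_i\wedge e'_j)_{1\le i<j\le n}$ (lexicographic order), $c,x'_1,\dots,x'_n,u'_1,\dots,u'_n,y'_1,\dots,y'_n,f,h$. (For $B=\{e_1,\dots,e_n\}$ this is the original basis; for every $B$ the bracket relations above hold with primed elements in place of unprimed ones.) *)

(* Defs.v *)
From HB Require Import structures.
From mathcomp Require Import all_boot all_order all_algebra.
Set Implicit Arguments. Unset Strict Implicit. Unset Printing Implicit Defensive.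
Import Order.TTheory GRing.Theory Num.Theory.
Local Open Scope ring_scope.

(* Index pairs (i,j) with i < j, labelling the basis vectors e_i /\ e_j. *)
Definition wpair (n : nat) := {p : 'I_n * 'I_n | (p.1 < p.2)%N}.

Inductive lbl (n : nat) :=
  | Le of 'I_n | La | Lb | Lx | Lu | Ly | Lw of wpair n | Lc
  | Lxi of 'I_n | Lui of 'I_n | Lyi of 'I_n | Lf | Lh.
Arguments La {n}. Arguments Lb {n}. Arguments Lx {n}. Arguments Lu {n}.
Arguments Ly {n}. Arguments Lc {n}. Arguments Lf {n}. Arguments Lh {n}.

Definition lbl_code n (l : lbl n) :
  ('I_n + 'I_5 + wpair n + unit + 'I_n + 'I_n + 'I_n + bool)%type :=
  match l with
  | Le i => inl (inl (inl (inl (inl (inl (inl i))))))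
  | La => inl (inl (inl (inl (inl (inl (inr (inord 0)))))))
  | Lb => inl (inl (inl (inl (inl (inl (inr (inord 1)))))))
  | Lx => inl (inl (inl (inl (inl (inl (inr (inord 2)))))))
  | Lu => inl (inl (inl (inl (inl (inl (inr (inord 3)))))))
  | Ly => inl (inl (inl (inl (inl (inl (inr (inord 4)))))))
  | Lw w => inl (inl (inl (inl (inl (inr w)))))
  | Lc => inl (inl (inl (inl (inr tt))))
  | Lxi i => inl (inl (inl (inr i)))
  | Lui i => inl (inl (inr i))
  | Lyi i => inl (inr i)
  | Lf => inr false
  | Lh => inr true
  end.

Definition lbl_decode n
  (s : ('I_n + 'I_5 + wpair n + unit + 'I_n + 'I_n + 'I_n + bool)%type) : lbl n :=
  match s with
  | inl (inl (inl (inl (inl (inl (inl i)))))) => Le i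
  | inl (inl (inl (inl (inl (inl (inr k)))))) =>
      match val k with 0 => La | 1 => Lb | 2 => Lx | 3 => Lu | _ => Ly end
  | inl (inl (inl (inl (inl (inr w))))) => Lw w
  | inl (inl (inl (inl (inr _)))) => Lc
  | inl (inl (inl (inr i))) => Lxi i
  | inl (inl (inr i)) => Lui i
  | inl (inr i) => Lyi i
  | inr false => Lf
  | inr true => Lh
  end.

Lemma lbl_codeK n : cancel (@lbl_code n) (@lbl_decode n).
Proof. by case=> //= *; rewrite inordK. Qed.

HB.instance Definition _ n := Finite.copy (lbl n) (can_type (@lbl_codeK n)).

Section LieAlg.
Variables (K : fieldType) (n : nat).

(* Vectors of n(n): coordinate functions on the original basis. *)
Definition vec := {ffun lbl n -> K^o}.

Definition bv (l : lbl n) : vec := [ffun m => (m == l)%:R].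

(* One-sided table of the defining brackets [l, m] (listed pairs only). *)
Definition br1 (l m : lbl n) : vec :=
  match l, m with
  | Le i, Le j => if @insub _ (fun p : 'I_n * 'I_n => (p.1 < p.2)%N) (wpair n) (i, j)
                    is Some w then bv (Lw w) else 0
  | Le i, Lx => bv (Lxi i)
  | Le i, Lu => bv (Lui i)
  | Le i, Ly => bv (Lyi i)
  | La, Lb => bv Lc
  | La, Ly => bv Lf
  | La, Lc => bv Lh
  | Lb, Lu => bv Lh
  | Lb, Ly => bv Lh
  | Lx, Lu => bv Lf
  | Lx, Ly => bv Lh
  | _, _ => 0
  end.

Definition br (l m : lbl n) : vec := br1 l m - br1 m l.

Definition bracket (v w : vec) : vec :=
  \sum_(l : lbl n) \sum_(m : lbl n) (v l * w m) *: br l m.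

(* E = span{e_i}, W = span of the other basis vectors. *)
Definition inE (v : vec) : Prop := forall l, (if l is Le _ then false else true) -> v l = 0.
Definition inW (v : vec) : Prop := forall i, v (Le i) = 0.

Definition is_derivation (D : vec -> vec) : Prop :=
  linear D /\ forall v w, D (bracket v w) = bracket (D v) w + bracket v (D w).

Definition Der1 (D : vec -> vec) : Prop :=
  is_derivation D /\ forall v, inE v -> inW (D v).

(* A basis B = {e'_1,...,e'_n} of E is given by an invertible matrix P:
   e'_i = sum_j P i j e_j. *)
Definition eprime (P : 'M[K]_n) (i : 'I_n) : vec := \sum_j P i j *: bv (Le j).

Definition bprime (P : 'M[K]_n) (l : lbl n) : vec :=
  match l with
  | Le i => eprime P i
  | Lw w => bracket (eprime P (val w).1) (eprime P (val w).2)
  | Lxi i => bracket (eprime P i) (bv Lx)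
  | Lui i => bracket (eprime P i) (bv Lu)
  | Lyi i => bracket (eprime P i) (bv Ly)
  | l => bv l
  end.

(* Position of a label in the order of frak{B}(B):
   e_1..e_n, a, b, x, u, y, wedges (lexicographic), c, x_i, u_i, y_i, f, h. *)
Definition grp (l : lbl n) : nat :=
  match l with
  | Le _ => 0 | La => 1 | Lb => 2 | Lx => 3 | Lu => 4 | Ly => 5 | Lw _ => 6
  | Lc => 7 | Lxi _ => 8 | Lui _ => 9 | Lyi _ => 10 | Lf => 11 | Lh => 12
  end%N.
Definition key (l : lbl n) : nat :=
  match l with
  | Le i | Lxi i | Lui i | Lyi i => i
  | Lw w => (val w).1 * n + (val w).2
  | _ => 0
  end%N.
Definition prec (m l : lbl n) : bool :=
  (grp m < grp l)%N || ((grp m == grp l) && (key m < key l)%N).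

End LieAlg.

(* Main.v *)
Require Import Defs.
From HB Require Import structures.
From mathcomp Require Import all_boot all_order all_algebra.
Set Implicit Arguments. Unset Strict Implicit. Unset Printing Implicit Defensive.
Import Order.TTheory GRing.Theory.
Local Open Scope ring_scope.

Section Main.
Variables (K : fieldType) (n : nat).
Local Notation vec := (vec K n).
Local Notation bv := (@bv K n).
Local Notation br := (@br K n).
Local Notation bracket := (@bracket K n).
Local Notation lbl := (lbl n).

Definition lbl_eqb (l m : lbl) : bool :=
  match l, m with
  | Le i, Le j => i == j | Lw v, Lw w => v == w | Lxi i, Lxi j => i == j
  | Lui i, Lui j => i == j | Lyi i, Lyi j => i == j
  | _, _ => (grp l == grp m)%N end.
Lemma lbl_eqE (l m : lbl) : (l == m) = lbl_eqb l m.
Proof.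
apply/eqP/idP => [->|]; first by case: m => * /=.
by case: l; case: m => //= x y /eqP ->.
Qed.

Lemma scaleK (a x : K^o) : a *: x = a * x. Proof. by []. Qed.
Lemma vecZE (a : K) (v : vec) t : (a *: v) t = a * v t.
Proof. by rewrite ffunE. Qed.
Lemma vecDE (v w : vec) t : (v + w) t = v t + w t.
Proof. by rewrite ffunE. Qed.
Lemma vecNE (v : vec) t : (- v) t = - v t.
Proof. by rewrite ffunE. Qed.
Lemma vecBE (v w : vec) t : (v - w) t = v t - w t.
Proof. by rewrite !ffunE. Qed.
Lemma vec0E t : (0 : vec) t = 0.
Proof. by rewrite ffunE. Qed.
Lemma vecsumE I (r : seq I) (Pr : pred I) (F : I -> vec) t :
  (\sum_(i <- r | Pr i) F i) t = \sum_(i <- r | Pr i) F i t.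
Proof. by rewrite sum_ffunE. Qed.
Lemma bvE l m : bv l m = (m == l)%:R. Proof. by rewrite ffunE. Qed.

Lemma sum_pick (V : nmodType) (I : finType) (F : I -> V) l :
  (forall m, m != l -> F m = 0) -> \sum_m F m = F l.
Proof. by move=> H; rewrite (bigD1 l) //= big1 ?addr0. Qed.

Lemma sum_pick2 (V : nmodType) (I : finType) (F : I -> V) l1 l2 : l1 != l2 ->
  (forall m, m != l1 -> m != l2 -> F m = 0) -> \sum_m F m = F l1 + F l2.
Proof.
move=> ne H; rewrite (bigD1 l1) //= (bigD1 l2) 1?eq_sym //= big1 ?addr0 //.
by move=> m /andP[h1 h2]; apply: H.
Qed.

Lemma vec_decomp (v : vec) : v = \sum_m v m *: bv m.
Proof.
apply/ffunP => t; rewrite vecsumE (sum_pick (l:=t)) ?vecZE ?bvE ?eqxx ?mulr1 //.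
by move=> m /negbTE; rewrite vecZE bvE eq_sym => ->; rewrite mulr0.
Qed.

Lemma bracketE (v w : vec) :
  bracket v w = \sum_l \sum_m (v l * w m) *: br l m.
Proof. by []. Qed.

Lemma bracketDl u v w : bracket (u + v) w = bracket u w + bracket v w.
Proof.
rewrite !bracketE -big_split /=; apply: eq_bigr => l _.
rewrite -big_split /=; apply: eq_bigr => m _.
by rewrite vecDE mulrDl scalerDl.
Qed.
Lemma bracketDr u v w : bracket u (v + w) = bracket u v + bracket u w.
Proof.
rewrite !bracketE -big_split /=; apply: eq_bigr => l _.
rewrite -big_split /=; apply: eq_bigr => m _.
by rewrite vecDE mulrDr scalerDl.
Qed.
Lemma bracketZl a v w : bracket (a *: v) w = a *: bracket v w.
Proof.
rewrite !bracketE scaler_sumr; apply: eq_bigr => l _.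
rewrite scaler_sumr; apply: eq_bigr => m _.
by rewrite vecZE scalerA mulrA.
Qed.
Lemma bracketZr a v w : bracket v (a *: w) = a *: bracket v w.
Proof.
rewrite !bracketE scaler_sumr; apply: eq_bigr => l _.
rewrite scaler_sumr; apply: eq_bigr => m _.
by rewrite vecZE scalerA mulrCA.
Qed.
Lemma bracket0l w : bracket 0 w = 0.
Proof. by rewrite -{1}[0 : vec](scale0r (0:vec)) bracketZl scale0r. Qed.
Lemma bracket0r w : bracket w 0 = 0.
Proof. by rewrite -{1}[0 : vec](scale0r (0:vec)) bracketZr scale0r. Qed.

Lemma bracket_suml I (r : seq I) (Pr : pred I) (F : I -> vec) w :
  bracket (\sum_(i <- r | Pr i) F i) w = \sum_(i <- r | Pr i) bracket (F i) w.
Proof.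
apply: (big_rec2 (fun a b => bracket a w = b)); first exact: bracket0l.
by move=> i a b _ <-; rewrite bracketDl.
Qed.
Lemma bracket_sumr I (r : seq I) (Pr : pred I) (F : I -> vec) w :
  bracket w (\sum_(i <- r | Pr i) F i) = \sum_(i <- r | Pr i) bracket w (F i).
Proof.
apply: (big_rec2 (fun a b => bracket w a = b)); first exact: bracket0r.
by move=> i a b _ <-; rewrite bracketDr.
Qed.

Lemma br_anti l m : br l m = - br m l.
Proof. by rewrite /br opprB. Qed.

Lemma bracket_anti v w : bracket v w = - bracket w v.
Proof.
rewrite !bracketE exchange_big -sumrN; apply: eq_bigr => l _.
rewrite -sumrN; apply: eq_bigr => m _.
by rewrite br_anti scalerN mulrC.
Qed.

Lemma bracket_bvr v m : bracket v (bv m) = \sum_l v l *: br l m.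
Proof.
rewrite bracketE; apply: eq_bigr => l _.
rewrite (sum_pick (l:=m)) ?bvE ?eqxx ?mulr1 // => m' /negbTE.
by rewrite bvE => ->; rewrite mulr0 scale0r.
Qed.
Lemma bracket_bvl l w : bracket (bv l) w = \sum_m w m *: br l m.
Proof.
rewrite bracketE (sum_pick (l:=l)) ?bvE.
  by apply: eq_bigr => m _; rewrite eqxx mul1r.
by move=> l' /negbTE; rewrite bvE => ->; rewrite big1 // => m _; rewrite mul0r scale0r.
Qed.
Lemma bracket_bv l m : bracket (bv l) (bv m) = br l m.
Proof.
rewrite bracket_bvl (sum_pick (l:=m)) ?bvE ?eqxx ?scale1r //.
by move=> m' /negbTE; rewrite bvE => ->; rewrite scale0r.
Qed.
Lemma bracket_bvrE v m t : bracket v (bv m) t = \sum_l v l * br l m t.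
Proof. by rewrite bracket_bvr vecsumE; apply: eq_bigr => l _; rewrite vecZE. Qed.
Lemma bracket_bvlE l w t : bracket (bv l) w t = \sum_m w m * br l m t.
Proof. by rewrite bracket_bvl vecsumE; apply: eq_bigr => m _; rewrite vecZE. Qed.


Variable (P : 'M[K]_n).
Hypothesis hP : P \in unitmx.
Local Notation bp := (bprime P).
Local Notation ep := (eprime P).

Definition inspan (S : pred lbl) (v : vec) :=
  exists c : lbl -> K, v = \sum_m c m *: bp m /\ forall m, ~~ S m -> c m = 0.

Lemma inspan0 (S : pred lbl) : inspan S 0.
Proof. by exists (fun=> 0); split=> // ; rewrite big1 // => m _; rewrite scale0r. Qed.
Lemma inspanD (S : pred lbl) v w : inspan S v -> inspan S w -> inspan S (v + w).
Proof.
move=> [c [-> hc]] [d [-> hd]]; exists (fun m => c m + d m); split.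
  by rewrite -big_split; apply: eq_bigr => m _; rewrite scalerDl.
by move=> m hm; rewrite hc ?hd ?addr0.
Qed.
Lemma inspanZ (S : pred lbl) a v : inspan S v -> inspan S (a *: v).
Proof.
move=> [c [-> hc]]; exists (fun m => a * c m); split.
  by rewrite scaler_sumr; apply: eq_bigr => m _; rewrite scalerA.
by move=> m hm; rewrite hc ?mulr0.
Qed.
Lemma inspanN (S : pred lbl) v : inspan S v -> inspan S (- v).
Proof. by move=> h; rewrite -scaleN1r; apply: inspanZ. Qed.
Lemma inspan_sum (S : pred lbl) I (r : seq I) (Pr : pred I) (F : I -> vec) :
  (forall i, Pr i -> inspan S (F i)) -> inspan S (\sum_(i <- r | Pr i) F i).
Proof. by move=> h; apply: big_ind => //; [apply: inspan0 | apply: inspanD]. Qed.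
Lemma inspan_bp (S : pred lbl) m : S m -> inspan S (bp m).
Proof.
move=> hm; exists (fun m' => (m' == m)%:R); split.
  rewrite (sum_pick (l:=m)) ?eqxx ?scale1r // => m' /negbTE ->.
  by rewrite scale0r.
by move=> m' hm'; case: eqP hm' => // ->; rewrite hm.
Qed.
Lemma inspan_sub (S1 S2 : pred lbl) v :
  (forall m, S1 m -> S2 m) -> inspan S1 v -> inspan S2 v.
Proof.
move=> h [c [-> hc]]; exists c; split=> // m hm; apply: hc.
by apply/negP => /h; apply/negP.
Qed.

Lemma inv_comb (g g' : 'I_n -> vec) :
  (forall j, g' j = \sum_i P j i *: g i) ->
  forall k, g k = \sum_j invmx P k j *: g' j.
Proof.
move=> H k.
under eq_bigr do rewrite H scaler_sumr.
rewrite exchange_big /=.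
have E i : \sum_j invmx P k j *: (P j i *: g i) = (invmx P *m P) k i *: g i.
  by rewrite mxE scaler_suml; apply: eq_bigr => j _; rewrite scalerA.
under eq_bigr do rewrite E.
rewrite mulVmx // (sum_pick (l:=k)) ?mxE ?eqxx ?scale1r //.
by move=> i /negbTE; rewrite mxE eq_sym => ->; rewrite scale0r.
Qed.

Lemma bpLe i : bp (Le i) = \sum_j P i j *: bv (Le j).
Proof. by []. Qed.
Lemma bpLxi i : bp (Lxi i) = \sum_j P i j *: bv (Lxi j).
Proof.
rewrite /= /eprime bracket_suml; apply: eq_bigr => j _.
by rewrite bracketZl bracket_bv /br /= subr0.
Qed.
Lemma bpLui i : bp (Lui i) = \sum_j P i j *: bv (Lui j).
Proof.
rewrite /= /eprime bracket_suml; apply: eq_bigr => j _.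
by rewrite bracketZl bracket_bv /br /= subr0.
Qed.
Lemma bpLyi i : bp (Lyi i) = \sum_j P i j *: bv (Lyi j).
Proof.
rewrite /= /eprime bracket_suml; apply: eq_bigr => j _.
by rewrite bracketZl bracket_bv /br /= subr0.
Qed.

Hypothesis hchar : [pchar K] =i pred0.

Lemma bracket_self v : bracket v v = 0.
Proof.
have h2 : (2%:R : K) != 0.
  apply/negP => /(natf0_pchar (isT : (0 < 2)%N)) [p].
  by rewrite hchar.
have e : 2%:R *: bracket v v = 0.
  by rewrite mulr2n scalerDl scale1r {1}bracket_anti addNr.
by rewrite -[bracket v v]scale1r -(mulVf h2) -scalerA e scaler0.
Qed.

Lemma brLeLe (w : wpair n) : br (Le (val w).1) (Le (val w).2) = bv (Lw w).
Proof.
case: w => [[k l] hkl] /=; rewrite /br /=.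
case: insubP => [w' _ ew'|]; last by rewrite /= hkl.
case: insubP => [w'' /= hlk _|_].
  by have := ltn_trans hkl hlk; rewrite ltnn.
rewrite subr0; congr (bv (Lw _)); apply: val_inj; exact: ew'.
Qed.

Lemma bv_span m : inspan (fun m' => grp m' == grp m)%N (bv m).
Proof.
case: m => [k| | | | | |w| |k|k|k| |];
  [ | exact: (@inspan_bp _ La) | exact: (@inspan_bp _ Lb)
    | exact: (@inspan_bp _ Lx) | exact: (@inspan_bp _ Lu) | exact: (@inspan_bp _ Ly)
    | | exact: (@inspan_bp _ Lc) | | | | exact: (@inspan_bp _ Lf) | exact: (@inspan_bp _ Lh)].
- rewrite (@inv_comb (fun j => bv (Le j)) (fun j => bp (Le j))) //.
  by apply: inspan_sum => j _; apply: inspanZ; apply: inspan_bp.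
- case: w => [[k l] hkl]; rewrite -brLeLe /= -bracket_bv.
  rewrite (@inv_comb (fun j => bv (Le j)) (fun j => bp (Le j))) //.
  rewrite [X in bracket _ X](@inv_comb (fun j => bv (Le j)) (fun j => bp (Le j))) //.
  rewrite bracket_suml; apply: inspan_sum => j _; rewrite bracketZl; apply: inspanZ.
  rewrite bracket_sumr; apply: inspan_sum => j' _; rewrite bracketZr; apply: inspanZ.
  case: (ltngtP j j') => [hjj|hjj|/val_inj ->]; last by rewrite bracket_self; apply: inspan0.
    by apply: (@inspan_bp _ (Lw (exist _ (j, j') hjj))).
  rewrite bracket_anti; apply: inspanN.
  by apply: (@inspan_bp _ (Lw (exist _ (j', j) hjj))).
- rewrite (@inv_comb (fun j => bv (Lxi j)) (fun j => bp (Lxi j))) //; last exact: bpLxi.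
  by apply: inspan_sum => j _; apply: inspanZ; apply: inspan_bp.
- rewrite (@inv_comb (fun j => bv (Lui j)) (fun j => bp (Lui j))) //; last exact: bpLui.
  by apply: inspan_sum => j _; apply: inspanZ; apply: inspan_bp.
- rewrite (@inv_comb (fun j => bv (Lyi j)) (fun j => bp (Lyi j))) //; last exact: bpLyi.
  by apply: inspan_sum => j _; apply: inspanZ; apply: inspan_bp.
Qed.

Lemma inspan_grp (k : nat) (v : vec) : (forall m, (grp m < k)%N -> v m = 0) ->
  inspan (fun m => k <= grp m)%N v.
Proof.
move=> h; rewrite (vec_decomp v); apply: inspan_sum => m _.
case: (leqP k (grp m)) => hk; last by rewrite h // scale0r; apply: inspan0.
apply: inspanZ; apply: inspan_sub (bv_span m).
by move=> m' /eqP ->.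
Qed.

Variable D : vec -> vec.
Hypothesis hD : Der1 D.

Lemma linD : linear D. Proof. by case: hD => [[]]. Qed.
Lemma derD v w : D (bracket v w) = bracket (D v) w + bracket v (D w).
Proof. by case: hD => [[_ ->]]. Qed.
Lemma DW v : Defs.inE v -> Defs.inW (D v). Proof. by case: hD => _; apply. Qed.
Lemma D0 : D 0 = 0.
Proof.
have := linD 1 0 0; rewrite !scale1r addr0 => h.
by apply: (@addrI _ (D 0)); rewrite addr0 -h.
Qed.
Lemma DDl v w : D (v + w) = D v + D w.
Proof. by have := linD 1 v w; rewrite !scale1r. Qed.
Lemma DZl a v : D (a *: v) = a *: D v.
Proof. by have := linD a v 0; rewrite !addr0 D0 addr0. Qed.
Lemma Dsum I (r : seq I) (Pr : pred I) (F : I -> vec) :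
  D (\sum_(i <- r | Pr i) F i) = \sum_(i <- r | Pr i) D (F i).
Proof.
apply: (big_rec2 (fun a b => D a = b)); first exact: D0.
by move=> i a b _ <-; rewrite DDl.
Qed.

Local Notation d l := (D (bv l)).

Lemma der_coord l m t :
  D (br l m) t = \sum_p d l p * br p m t + \sum_p d m p * br l p t.
Proof. by rewrite -bracket_bv derD vecDE bracket_bvrE bracket_bvlE. Qed.

Ltac brsimp := rewrite /br /= ?vecBE ?vec0E ?bvE ?lbl_eqE /= ?mulr0n ?mulr1n
   ?subr0 ?sub0r ?mulr0 ?mul0r ?oppr0 ?mulr1 ?mulrN1; try done.

Lemma dLa_E j : d La (Le j) = 0.
Proof.
have := der_coord La Lx (Lxi j).
have -> : \sum_p d La p * br p Lx (Lxi j) = d La (Le j).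
  rewrite (sum_pick (l:=Le j)); first by brsimp; rewrite eqxx mulr1.
  case=> [i| | | | | |w| |i|i|i| |] hp; brsimp.
  by rewrite lbl_eqE /= in hp; rewrite eq_sym (negbTE hp) mulr0.
rewrite big1 => [|p _]; last by case: p => *; brsimp.
by brsimp; rewrite D0 vec0E addr0.
Qed.


Ltac side := let hp := fresh "hp" in let i := fresh "i" in
  case=> [i| | | | | |? | |i|i|i| |] hp; brsimp;
  rewrite ?lbl_eqE /= in hp; rewrite ?[_ == i]eq_sym ?(negbTE hp) ?mulr0 //.

Lemma dc_low t : (grp t < 7)%N -> d Lc t = 0.
Proof.
move=> ht; have := der_coord La Lb t.
rewrite !big1 => [|p _|p _]; try by case: p; case: t ht => *; brsimp.
by brsimp; rewrite addr0.
Qed.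

Lemma dh_low t : (grp t < 12)%N -> d Lh t = 0.
Proof.
move=> ht; have := der_coord La Lc t.
rewrite !big1 => [|p _|p _];
  try by case: p; case: t ht => *; brsimp; rewrite ?dc_low.
by brsimp; rewrite addr0.
Qed.


Lemma dLb_E j : d Lb (Le j) = 0.
Proof.
have := der_coord Lb Lx (Lxi j).
rewrite (sum_pick (l:=Le j)); last by side.
rewrite big1 => [|p _]; last by case: p => *; brsimp.
by brsimp; rewrite ?eqxx /= ?mulr1n ?mulr1 D0 vec0E addr0.
Qed.

Lemma dLx_E j : d Lx (Le j) = 0.
Proof.
have := der_coord Lx Ly (Lyi j).
rewrite (sum_pick (l:=Le j)); last by side.
rewrite big1 => [|p _]; last by case: p => *; brsimp.
by brsimp; rewrite ?eqxx /= ?mulr1n ?mulr1 dh_low // addr0.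
Qed.

Lemma dLu_E j : d Lu (Le j) = 0.
Proof.
have := der_coord Lu Ly (Lyi j).
rewrite (sum_pick (l:=Le j)); last by side.
rewrite big1 => [|p _]; last by case: p => *; brsimp.
by brsimp; rewrite ?eqxx /= ?mulr1n ?mulr1 D0 vec0E addr0.
Qed.

Lemma dLy_E j : d Ly (Le j) = 0.
Proof.
have := der_coord Ly Lu (Lui j).
rewrite (sum_pick (l:=Le j)); last by side.
rewrite big1 => [|p _]; last by case: p => *; brsimp.
by brsimp; rewrite ?eqxx /= ?mulr1n ?mulr1 D0 vec0E addr0.
Qed.


Lemma dba : d Lb La = 0.
Proof.
have := der_coord Lb Lc Lh.
rewrite (sum_pick (l:=La)); last by side.
rewrite big1 => [|p _]; last by case: p => *; brsimp; rewrite dc_low.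
by brsimp; rewrite D0 vec0E addr0.
Qed.

Lemma dxa : d Lx La = 0.
Proof.
have := der_coord Lx Lc Lh.
rewrite (sum_pick (l:=La)); last by side.
rewrite big1 => [|p _]; last by case: p => *; brsimp; rewrite dc_low.
by brsimp; rewrite D0 vec0E addr0.
Qed.

Lemma dua : d Lu La = 0.
Proof.
have := der_coord Lu Lc Lh.
rewrite (sum_pick (l:=La)); last by side.
rewrite big1 => [|p _]; last by case: p => *; brsimp; rewrite dc_low ?oppr0.
by brsimp; rewrite D0 vec0E addr0.
Qed.

Lemma dya : d Ly La = 0.
Proof.
have := der_coord Ly Lc Lh.
rewrite (sum_pick (l:=La)); last by side.
rewrite big1 => [|p _]; last by case: p => *; brsimp; rewrite dc_low ?oppr0.
by brsimp; rewrite D0 vec0E addr0.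
Qed.

Lemma dxb : d Lx Lb = 0.
Proof.
have := der_coord Lx La Lc.
rewrite (sum_pick (l:=Lb)); last by side.
rewrite big1 => [|p _]; last by case: p => *; brsimp.
by brsimp; rewrite D0 vec0E addr0 => /eqP; rewrite eq_sym oppr_eq0 => /eqP.
Qed.

Lemma dub : d Lu Lb = 0.
Proof.
have := der_coord Lu La Lc.
rewrite (sum_pick (l:=Lb)); last by side.
rewrite big1 => [|p _]; last by case: p => *; brsimp.
by brsimp; rewrite D0 vec0E addr0 => /eqP; rewrite eq_sym oppr_eq0 => /eqP.
Qed.

Lemma dyb : d Ly Lb = 0.
Proof.
have S1 : \sum_p d Lx p * br p Lu Lc = 0.
  by rewrite big1 // => p _; case: p => *; brsimp.
have S2 : \sum_p d Lu p * br Lx p Lc = 0.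
  by rewrite big1 // => p _; case: p => *; brsimp.
have S3 : \sum_p d La p * br p Ly Lc = 0.
  by rewrite big1 // => p _; case: p => *; brsimp.
have := der_coord La Ly Lc; have := der_coord Lx Lu Lc.
rewrite S1 S2 S3 addr0 add0r.
rewrite (sum_pick (l:=Lb)); last by side.
by brsimp => ->.
Qed.


Lemma dux : d Lu Lx = 0.
Proof.
have := der_coord Lu Ly Lh.
rewrite (sum_pick (l:=Lx)); last by side; rewrite ?dub.
rewrite big1 => [|p _]; last by case: p => *; brsimp; rewrite ?dyb ?oppr0.
by brsimp; rewrite D0 vec0E addr0.
Qed.

Lemma dyx : d Ly Lx = 0.
Proof.
have := der_coord Lu Ly Lf.
rewrite big1 => [|p _]; last by case: p => *; brsimp; rewrite ?dua.
rewrite (sum_pick (l:=Lx)); last by side.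
by brsimp; rewrite D0 vec0E add0r => /eqP; rewrite eq_sym oppr_eq0 => /eqP.
Qed.

Lemma dyu : d Ly Lu = 0.
Proof.
have := der_coord Lx Ly Lf.
rewrite big1 => [|p _]; last by case: p => *; brsimp; rewrite ?dxa.
rewrite (sum_pick (l:=Lu)); last by side.
by brsimp; rewrite dh_low // add0r.
Qed.

Lemma df_low t : (grp t < 11)%N -> d Lf t = 0.
Proof.
move=> ht; have := der_coord La Ly t.
rewrite big1 => [|p _]; last by case: p; case: t ht => *; brsimp; rewrite ?dLa_E ?mul0r.
rewrite big1 => [|p _]; last by case: p; case: t ht => *; brsimp; rewrite ?dyb.
by brsimp; rewrite addr0.
Qed.


Lemma gen_case l : (forall m, (grp m < grp l)%N -> d l m = 0) -> key l = 0%N ->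
  inspan (fun m => ~~ prec m l) (d l).
Proof.
move=> h hk; apply: inspan_sub (inspan_grp h) => m hm.
by rewrite /prec hk ltn0 andbF orbF -leqNgt.
Qed.

Lemma ep_inE i : Defs.inE (ep i).
Proof.
move=> l hl; rewrite /eprime vecsumE big1 // => j _.
by rewrite vecZE bvE; case: l hl => //= *; rewrite ?mulr0n ?mulr0.
Qed.

Lemma brWE (u : vec) j t : Defs.inW u -> (grp t < 8)%N -> bracket u (ep j) t = 0.
Proof.
move=> hu ht; rewrite /eprime bracket_sumr vecsumE big1 // => k _.
rewrite bracketZr vecZE bracket_bvrE big1 ?mulr0 // => p _.
by case: p; case: t ht => *; brsimp; rewrite ?hu ?mul0r.
Qed.

Lemma brEW (u : vec) j t : Defs.inW u -> (grp t < 8)%N -> bracket (ep j) u t = 0.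
Proof. by move=> hu ht; rewrite bracket_anti vecNE brWE // oppr0. Qed.

Lemma brWbv (u : vec) m t : Defs.inW u -> (grp m \in [:: 3; 4; 5])%N ->
  (grp t < 11)%N -> bracket u (bv m) t = 0.
Proof.
move=> hu hm ht; rewrite bracket_bvrE big1 // => p _.
by case: m hm => //= _; case: p; case: t ht => *; brsimp; rewrite ?hu ?mul0r.
Qed.

Lemma brE0 i m : (grp m \notin [:: 0; 3; 4; 5])%N -> bracket (ep i) (bv m) = 0.
Proof.
move=> hm; apply/ffunP => t; rewrite vec0E /eprime bracket_suml vecsumE.
rewrite big1 // => k _; rewrite bracketZl vecZE bracket_bv.
by case: m hm => *; brsimp.
Qed.

Lemma brEd i (v : vec) (S : pred lbl) : (forall k, v (Le k) = 0) ->
  (v Lx = 0 \/ S (Lxi i)) -> (v Lu = 0 \/ S (Lui i)) -> (v Ly = 0 \/ S (Lyi i)) ->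
  inspan S (bracket (ep i) v).
Proof.
move=> hE hx hu hy; rewrite {1}(vec_decomp v) bracket_sumr.
apply: inspan_sum => m _; rewrite bracketZr.
case: m => [k| | | | | |w| |k|k|k| |];
  try by rewrite brE0 // scaler0; apply: inspan0.
- by rewrite hE scale0r; apply: inspan0.
- case: hx => [->|hs]; first by rewrite scale0r; apply: inspan0.
  by apply: inspanZ; apply: (@inspan_bp _ (Lxi i)).
- case: hu => [->|hs]; first by rewrite scale0r; apply: inspan0.
  by apply: inspanZ; apply: (@inspan_bp _ (Lui i)).
- case: hy => [->|hs]; first by rewrite scale0r; apply: inspan0.
  by apply: inspanZ; apply: (@inspan_bp _ (Lyi i)).
Qed.

Lemma main_sec l : inspan (fun m => ~~ prec m l) (D (bp l)).
Proof.
case: l => [i| | | | | |w| |i|i|i| |].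
- apply: inspan_sub (inspan_grp (k:=1) _) => [m hm|m hm].
    by rewrite /prec ltn0 /=; case: m hm.
  by case: m hm => //= k _; apply: (DW (@ep_inE i)).
- apply: gen_case => //; move: dLa_E; move: (D (bv La)) => v h1.
  by case => //= *; rewrite ?h1.
- apply: gen_case => //; move: dLb_E dba; move: (D (bv Lb)) => v h1 h2.
  by case => //= *; rewrite ?h1 ?h2.
- apply: gen_case => //; move: dLx_E dxa dxb; move: (D (bv Lx)) => v h1 h2 h3.
  by case => //= *; rewrite ?h1 ?h2 ?h3.
- apply: gen_case => //; move: dLu_E dua dub dux; move: (D (bv Lu)) => v h1 h2 h3 h4.
  by case => //= *; rewrite ?h1 ?h2 ?h3 ?h4.
- apply: gen_case => //; move: dLy_E dya dyb dyx dyu.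
  move: (D (bv Ly)) => v h1 h2 h3 h4 h5.
  by case => //= *; rewrite ?h1 ?h2 ?h3 ?h4 ?h5.
- apply: inspan_sub (inspan_grp (k:=8) _) => [m hm|m hm].
    by rewrite /prec; case: m hm.
  change (bp (Lw w)) with (bracket (ep (val w).1) (ep (val w).2)).
  rewrite derD vecDE brWE ?brEW ?addr0 //; exact: (DW (ep_inE _)).
- apply: gen_case => // m hm; exact: dc_low.
- change (bp (Lxi i)) with (bracket (ep i) (bv Lx)).
  rewrite derD; apply: inspanD.
    apply: inspan_sub (inspan_grp (k:=11) _) => [m hm|m hm].
      by rewrite /prec; case: m hm.
    apply: brWbv => //; exact: (DW (ep_inE _)).
  apply: brEd; first exact: dLx_E.
  + by right; rewrite /prec /= ltnn.
  + by right.
  + by right.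
- change (bp (Lui i)) with (bracket (ep i) (bv Lu)).
  rewrite derD; apply: inspanD.
    apply: inspan_sub (inspan_grp (k:=11) _) => [m hm|m hm].
      by rewrite /prec; case: m hm.
    apply: brWbv => //; exact: (DW (ep_inE _)).
  apply: brEd; first exact: dLu_E.
  + by left; exact: dux.
  + by right; rewrite /prec /= ltnn.
  + by right.
- change (bp (Lyi i)) with (bracket (ep i) (bv Ly)).
  rewrite derD; apply: inspanD.
    apply: inspan_sub (inspan_grp (k:=11) _) => [m hm|m hm].
      by rewrite /prec; case: m hm.
    apply: brWbv => //; exact: (DW (ep_inE _)).
  apply: brEd; first exact: dLy_E.
  + by left; exact: dyx.
  + by left; exact: dyu.
  + by right; rewrite /prec /= ltnn.
- apply: gen_case => // m hm; exact: df_low.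
- apply: gen_case => // m hm; exact: dh_low.
Qed.

End Main.

Theorem mainTheorem2 (K : fieldType) (n : nat) :
  [pchar K] =i pred0 -> (0 < n)%N ->
  forall (P : 'M[K]_n), P \in unitmx ->
  forall D : vec K n -> vec K n, Der1 D ->
  forall l : lbl n,
    exists c : lbl n -> K,
      D (bprime P l) = \sum_(m : lbl n) c m *: bprime P m /\
      (forall m, prec m l -> c m = 0).
Proof.
move=> hchar _ P hP D hD l.
have [c [h1 h2]] := main_sec hP hchar hD l.
by exists c; split=> // m hm; apply: h2; rewrite hm.
Qed.
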